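(* Consider the problem of minimizing $g(\mathbf{x})+f(\mathbf{x})+h(\mathbf{y})$ subject to $\mathbf{A}\mathbf{x}+\mathbf{B}\mathbf{y}=\mathbf{0}$ (the coupling function $g$ depends only on $\mathbf{x}$), under the standing assumptions (i)–(iv) below, and let $\{(\mathbf{x}^k,\mathbf{y}^k,\boldsymbol{\gamma}^k)\}$ be generated by the two-block linearized ADMM below with parameters satisfying $$L_x\ge L_g+\beta L_{\mathbf{A}}+6L_w^2+1,\quad L_y\ge L_w+L_w^2+3,\quad C_m=\tfrac{L_y+L_w^2}{2},\quad \beta\ge\max\left\{\frac{L_w+L_y+2}{\lambda_{\mathbf{B}^{\rm T}\mathbf{B}}},\frac{3(L_w^2+L_y^2)}{\lambda_{\mathbf{B}^{\rm T}\mathbf{B}}C_m},\frac{3L_y^2}{\lambda_{\mathbf{B}^{\rm T}\mathbf{B}}}\right\},$$ where $L_{\mathbf{A}}$ is the largest eigenvalue of $\mathbf{A}^{\rm T}\mathbf{A}$, $\lambda_{\mathbf{B}^{\rm T}\mathbf{B}}$ the smallest eigenvalue of $\mathbf{B}^{\rm T}\mathbf{B}$, $L_w=L_g+L_h$. Then the sequence $\{g(\mathbf{x}^k)+f(\mathbf{x}^k)+h(\mathbf{y}^k)\}$ is convergent.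
   Context: Variables $\mathbf{x}\in\mathbb{R}^p$, $\mathbf{y}\in\mathbb{R}^q$; $\mathbf{A}\in\mathbb{R}^{n\times p}$, $\mathbf{B}\in\mathbb{R}^{n\times q}$; $f$ possibly nonconvex nonsmooth. A function is $L$-Lipschitz differentiable if its gradient is $L$-Lipschitz. Standing assumptions: (i) $h$ is $L_h$-Lipschitz differentiable; (ii) $g$ is $L_g$-Lipschitz differentiable; (iii) $g(\mathbf{x})+f(\mathbf{x})+h(\mathbf{y})$ is lower bounded on the feasible set $\{(\mathbf{x},\mathbf{y}):\mathbf{A}\mathbf{x}+\mathbf{B}\mathbf{y}=\mathbf{0}\}$ and coercive with respect to $\mathbf{y}$ over it (objective $\to+\infty$ along any feasible sequence with $\|\mathbf{y}^k\|\to\infty$); (iv) $\mathbf{B}$ has full column rank and $\mathrm{Im}(\mathbf{A})\subset\mathrm{Im}(\mathbf{B})$. Algorithm (parameters $L_x,L_y,\beta>0$, arbitrary initialization): $\mathbf{x}^{k+1}\in\arg\min\bar f^k$, $\mathbf{y}^{k+1}=\arg\min\bar h^k$, $\boldsymbol{\gamma}^{k+1}=\boldsymbol{\gamma}^k+\beta(\mathbf{A}\mathbf{x}^{k+1}+\mathbf{B}\mathbf{y}^{k+1})$, with $\bar f^k(\mathbf{x})=f(\mathbf{x})+\langle\boldsymbol{\gamma}^k,\mathbf{A}\mathbf{x}\rangle+\frac{L_x}{2}\|\mathbf{x}-\mathbf{x}^k\|^2+\langle\mathbf{x}-\mathbf{x}^k,\nabla g(\mathbf{x}^k)+\beta\mathbf{A}^{\rm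 T}(\mathbf{A}\mathbf{x}^k+\mathbf{B}\mathbf{y}^k)\rangle$, $\bar h^k(\mathbf{y})=\langle\boldsymbol{\gamma}^k,\mathbf{B}\mathbf{y}\rangle+\frac{L_y}{2}\|\mathbf{y}-\mathbf{y}^k\|^2+\frac{\beta}{2}\|\mathbf{A}\mathbf{x}^{k+1}+\mathbf{B}\mathbf{y}\|^2+\langle\mathbf{y}-\mathbf{y}^k,\nabla h(\mathbf{y}^k)\rangle$ (minimizers of $\bar f^k$ assumed to exist). *)

(* Defs.v *)
From HB Require Import structures.
From mathcomp Require Import all_boot all_order all_algebra.
From mathcomp Require Import all_classical all_reals all_analysis.
Set Implicit Arguments. Unset Strict Implicit. Unset Printing Implicit Defensive.
Import Order.TTheory GRing.Theory Num.Theory.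
Import numFieldNormedType.Exports.
Local Open Scope ring_scope.

Definition dotc (R : realType) (m : nat) (u v : 'cV[R]_m) : R := (u^T *m v) 0 0.
Definition enorm (R : realType) (m : nat) (u : 'cV[R]_m) : R := Num.sqrt (dotc u u).

Definition is_gradient (R : realType) (m : nat) (g : 'cV[R]_m -> R)
  (G : 'cV[R]_m -> 'cV[R]_m) : Prop :=
  forall x, differentiable g x /\ forall v, 'd g x v = dotc (G x) v.

Definition lipschitz_differentiable (R : realType) (m : nat) (L : R)
  (g : 'cV[R]_m -> R) (G : 'cV[R]_m -> 'cV[R]_m) : Prop :=
  is_gradient g G /\ forall x y, enorm (G x - G y) <= L * enorm (x - y).

(* Main.v *)
Require Import Defs.
From HB Require Import structures.
From mathcomp Require Import all_boot all_order all_algebra.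
From mathcomp Require Import all_classical all_reals all_analysis.
From mathcomp Require Import ring lra.
Import Order.TTheory GRing.Theory Num.Theory.
Import numFieldNormedType.Exports.
Set Implicit Arguments. Unset Strict Implicit. Unset Printing Implicit Defensive.
Local Open Scope classical_set_scope.
Local Open Scope ring_scope.



Lemma dotcE (R : realType) (m : nat) (u v : 'cV[R]_m) :
  dotc u v = \sum_i u i 0 * v i 0.
Proof. by rewrite /dotc !mxE; apply: eq_bigr => i _; rewrite !mxE. Qed.

Lemma dotcC (R : realType) (m : nat) (u v : 'cV[R]_m) : dotc u v = dotc v u.
Proof. by rewrite !dotcE; apply: eq_bigr => i _; rewrite mulrC. Qed.

Lemma dotcDl (R : realType) (m : nat) (u v w : 'cV[R]_m) :
  dotc (u + v) w = dotc u w + dotc v w.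
Proof. by rewrite !dotcE -big_split; apply: eq_bigr => i _; rewrite !mxE mulrDl. Qed.

Lemma dotcZl (R : realType) (m : nat) (a : R) (u w : 'cV[R]_m) :
  dotc (a *: u) w = a * dotc u w.
Proof. by rewrite !dotcE mulr_sumr; apply: eq_bigr => i _; rewrite !mxE mulrA. Qed.

Lemma dotcNl (R : realType) (m : nat) (u w : 'cV[R]_m) :
  dotc (- u) w = - dotc u w.
Proof. by rewrite -scaleN1r dotcZl mulN1r. Qed.

Lemma dotcBl (R : realType) (m : nat) (u v w : 'cV[R]_m) :
  dotc (u - v) w = dotc u w - dotc v w.
Proof. by rewrite dotcDl dotcNl. Qed.

Lemma dotcDr (R : realType) (m : nat) (u v w : 'cV[R]_m) :
  dotc w (u + v) = dotc w u + dotc w v.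
Proof. by rewrite dotcC dotcDl !(dotcC w). Qed.
Lemma dotcZr (R : realType) (m : nat) (a : R) (u w : 'cV[R]_m) :
  dotc w (a *: u) = a * dotc w u.
Proof. by rewrite dotcC dotcZl dotcC. Qed.
Lemma dotcNr (R : realType) (m : nat) (u w : 'cV[R]_m) :
  dotc w (- u) = - dotc w u.
Proof. by rewrite dotcC dotcNl dotcC. Qed.
Lemma dotcBr (R : realType) (m : nat) (u v w : 'cV[R]_m) :
  dotc w (u - v) = dotc w u - dotc w v.
Proof. by rewrite dotcDr dotcNr. Qed.
Lemma dotc0l (R : realType) (m : nat) (w : 'cV[R]_m) : dotc 0 w = 0.
Proof. by rewrite -(scale0r (0 : 'cV[R]_m)) dotcZl mul0r. Qed.
Lemma dotc0r (R : realType) (m : nat) (w : 'cV[R]_m) : dotc w 0 = 0.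
Proof. by rewrite dotcC dotc0l. Qed.

Lemma dotc_mulmx (R : realType) (m k : nat) (M : 'M[R]_(m, k)) u v :
  dotc u (M *m v) = dotc (M^T *m u) v.
Proof. by rewrite /dotc trmx_mul trmxK mulmxA. Qed.

Lemma dotc_ge0 (R : realType) (m : nat) (u : 'cV[R]_m) : 0 <= dotc u u.
Proof. by rewrite dotcE; apply: sumr_ge0 => i _; rewrite -expr2 sqr_ge0. Qed.

Lemma dotc_eq0 (R : realType) (m : nat) (u : 'cV[R]_m) : dotc u u = 0 -> u = 0.
Proof.
rewrite dotcE => /eqP; rewrite psumr_eq0; last by move=> i _; rewrite -expr2 sqr_ge0.
move=> /allP H; apply/matrixP => i j; rewrite ord1 mxE.
have := H i (mem_index_enum _); rewrite -expr2 sqrf_eq0 => /eqP //.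
Qed.

Lemma enorm_sq (R : realType) (m : nat) (u : 'cV[R]_m) : enorm u ^+ 2 = dotc u u.
Proof. by rewrite /enorm sqr_sqrtr // dotc_ge0. Qed.

Lemma enorm_ge0 (R : realType) (m : nat) (u : 'cV[R]_m) : 0 <= enorm u.
Proof. by rewrite /enorm sqrtr_ge0. Qed.

Lemma young (R : realType) (m : nat) (t : R) (u v : 'cV[R]_m) : 0 < t ->
  2 * dotc u v <= t * dotc u u + t^-1 * dotc v v.
Proof.
move=> t0; have := dotc_ge0 (t *: u - v).
rewrite !(dotcBl, dotcBr, dotcZl, dotcZr) (dotcC v u) => h.
rewrite -(ler_pM2l t0) mulrDr !mulrA mulfV ?gt_eqF // mul1r.
nra.
Qed.

Lemma young1 (R : realType) (m : nat) (u v : 'cV[R]_m) :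
  2 * dotc u v <= dotc u u + dotc v v.
Proof. by have := @young R m 1 u v ltr01; rewrite invr1 !mul1r. Qed.

Lemma dotc_abs (R : realType) (m : nat) (u v : 'cV[R]_m) :
  `|dotc u v| <= (dotc u u + dotc v v) / 2.
Proof.
have h1 := young1 u v; have h2 := young1 (-u) v.
rewrite dotcNl dotcNr dotcNl opprK in h2.
rewrite ler_norml; apply/andP; split; lra.
Qed.

Lemma nqD2 (R : realType) (m : nat) (u v : 'cV[R]_m) :
  dotc (u + v) (u + v) <= 2 * dotc u u + 2 * dotc v v.
Proof.
have := young1 u v; rewrite !(dotcDl, dotcDr) (dotcC v u) => h; lra.
Qed.

Lemma nqD3 (R : realType) (m : nat) (u v w : 'cV[R]_m) :
  dotc (u + v + w) (u + v + w) <= 3 * dotc u u + 3 * dotc v v + 3 * dotc w w.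
Proof.
have := young1 u v; have := young1 u w; have := young1 v w.
rewrite !(dotcDl, dotcDr) (dotcC v u) (dotcC w u) (dotcC w v) => h1 h2 h3; lra.
Qed.

Lemma nqDZ (R : realType) (m : nat) (t : R) (u v : 'cV[R]_m) :
  dotc (u + t *: v) (u + t *: v) = dotc u u + 2 * t * dotc u v + t ^+ 2 * dotc v v.
Proof. rewrite !(dotcDl, dotcDr, dotcZl, dotcZr) (dotcC v u); ring. Qed.


Lemma coord_le (R : realType) (m : nat) (w : 'cV[R]_m) i : w i 0 ^+ 2 <= dotc w w.
Proof.
rewrite dotcE (bigD1 i) //= -expr2 lerDl; apply: sumr_ge0 => j _; by rewrite -expr2 sqr_ge0.
Qed.

Lemma qform_bound (R : realType) (m : nat) (M : 'M[R]_m) :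
  exists2 c, 0 <= c & forall w, `|dotc w (M *m w)| <= c * dotc w w.
Proof.
exists (\sum_i \sum_j `|M i j|); first by apply: sumr_ge0 => i _; apply: sumr_ge0.
move=> w; rewrite dotcE.
have -> : \sum_i w i 0 * (M *m w) i 0 = \sum_i \sum_j (M i j * (w i 0 * w j 0)).
  apply: eq_bigr => i _; rewrite mxE mulr_sumr; apply: eq_bigr => j _; ring.
apply: (le_trans (ler_norm_sum _ _ _)); rewrite mulr_suml; apply: ler_sum => i _.
apply: (le_trans (ler_norm_sum _ _ _)); rewrite mulr_suml; apply: ler_sum => j _.
rewrite normrM; apply: ler_wpM2l => //.
have hi := coord_le w i; have hj := coord_le w j.
rewrite ler_norml; apply/andP; split; nra.
Qed.

Lemma quad_disc (R : realType) (a b c : R) : 0 <= c ->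
  (forall t, 0 <= a + 2 * t * b + t ^+ 2 * c) -> b ^+ 2 <= a * c.
Proof.
move=> c0 H; case: (ltrgtP c 0) => [|cp|ce]; first by move=> /lt_le_trans/(_ c0); rewrite ltxx.
- have := H (- (b / c)); set t := b / c; have hb : b = t * c by rewrite /t divfK ?gt_eqF.
  rewrite hb => h; nra.
- rewrite ce mulr0; case: (eqVneq b 0) => [->|bn]; first by rewrite expr0n.
  have := H (- (a + 1) / (2 * b)); rewrite ce mulr0 addr0.
  have -> : 2 * (- (a + 1) / (2 * b)) * b = - (a + 1).
    field; by rewrite bn.
  lra.
Qed.

Lemma qexp (R : realType) (m : nat) (N : 'M[R]_m) (u w : 'cV[R]_m) (t : R) :
  N^T = N ->
  dotc (u + t *: w) (N *m (u + t *: w)) =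
  dotc u (N *m u) + 2 * t * dotc u (N *m w) + t ^+ 2 * dotc w (N *m w).
Proof.
move=> sym; rewrite mulmxDr -scalemxAr !(dotcDl, dotcDr, dotcZl, dotcZr).
rewrite [dotc w (N *m u)]dotc_mulmx sym [dotc (N *m w) u]dotcC; ring.
Qed.

Lemma semi_cs (R : realType) (m : nat) (N : 'M[R]_m) (u w : 'cV[R]_m) :
  N^T = N -> (forall v, 0 <= dotc v (N *m v)) ->
  dotc u (N *m w) ^+ 2 <= dotc u (N *m u) * dotc w (N *m w).
Proof.
move=> sym psd; apply: quad_disc => // t; rewrite -qexp //.
Qed.

Lemma spec_lb (R : realType) (m : nat) (M : 'M[R]_m) (lam : R) :
  M^T = M -> (forall a, eigenvalue M a -> lam <= a) ->
  forall w, lam * dotc w w <= dotc w (M *m w).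
Proof.
move=> sym lb w.
case: (eqVneq (dotc w w) 0) => [w0|wn0].
  by rewrite w0 (dotc_eq0 w0) mulmx0 dotc0l mulr0.
have wp : 0 < dotc w w by rewrite lt_neqAle eq_sym wn0 dotc_ge0.
pose E := [set x : R | exists2 v, dotc v v != 0 & x = dotc v (M *m v) / dotc v v].
have [c c0 hc] := qform_bound M.
have hlb : has_lbound E.
  exists (- c) => x [v vn ->].
  have vp : 0 < dotc v v by rewrite lt_neqAle eq_sym vn dotc_ge0.
  rewrite ler_pdivlMr //; have := hc v; rewrite ler_norml => /andP[h _].
  by rewrite mulNr.
have hne : E !=set0 by exists (dotc w (M *m w) / dotc w w); exists w.
set mu := inf E.
have lbmu : forall v, mu * dotc v v <= dotc v (M *m v).
  move=> v; case: (eqVneq (dotc v v) 0) => [v0|vn].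
    by rewrite v0 (dotc_eq0 v0) mulmx0 dotc0l mulr0.
  have vp : 0 < dotc v v by rewrite lt_neqAle eq_sym vn dotc_ge0.
  rewrite -ler_pdivlMr //; apply: (ge_inf hlb); by exists v.
pose N := M - mu%:M.
have QN : forall v, dotc v (N *m v) = dotc v (M *m v) - mu * dotc v v.
  by move=> v; rewrite /N mulmxBl mul_scalar_mx dotcBr dotcZr.
have symN : N^T = N by rewrite /N linearB /= tr_scalar_mx sym.
have psdN : forall v, 0 <= dotc v (N *m v) by move=> v; rewrite QN subr_ge0.
have nunit : ~~ (N \in unitmx).
  apply/negP => Nu; set P := invmx N.
  have [cN cN0 hcN] := qform_bound N.
  have [cP cP0 hcP] := qform_bound (P *m P^T).
  have key : forall v, dotc v v ^+ 2 <= cN * cP * dotc v v * dotc v (N *m v).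
    move=> v; have e : dotc v v = dotc (P^T *m v) (N *m v).
      by rewrite -dotc_mulmx mulKmx.
    rewrite {1}e.
    apply: (le_trans (semi_cs _ _ symN psdN)).
    apply: ler_wpM2r; first exact: psdN.
    have h1 := hcN (P^T *m v); rewrite ler_norml in h1; case/andP: h1 => _ h1.
    apply: (le_trans h1); rewrite -mulrA; apply: ler_wpM2l => //.
    have -> : dotc (P^T *m v) (P^T *m v) = dotc v ((P *m P^T) *m v).
      by rewrite -mulmxA -dotc_mulmx.
    by have := hcP v; rewrite ler_norml => /andP[_ ->].
  have Kp : 0 < cN * cP.
    have := key w; have := psdN w; rewrite expr2 => h1 h2.
    rewrite lt_neqAle mulr_ge0 // andbT; apply/negP => /eqP K0.
    by move: h2; rewrite -K0 !mul0r; nra.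
  have : mu + (cN * cP)^-1 <= mu.
    apply: lb_le_inf => // x [v vn ->].
    have vp : 0 < dotc v v by rewrite lt_neqAle eq_sym vn dotc_ge0.
    rewrite ler_pdivlMr // mulrDl.
    have := key v; rewrite QN expr2 => h.
    have h2 : dotc v v <= cN * cP * (dotc v (M *m v) - mu * dotc v v).
      rewrite -(ler_pM2r vp); move: h; set K := cN * cP; set X := (_ - _); set a := dotc v v; move=> h; lra.
    suff : dotc v v / (cN * cP) <= dotc v (M *m v) - mu * dotc v v by lra.
    by rewrite ler_pdivrMr // mulrC.
  by rewrite gerDl leNgt invr_gt0 Kp.
have : eigenvalue M mu.
  move: nunit; rewrite unitmxE unitfE negbK => /det0P[v vn vN].
  apply/eigenvalueP; exists v => //.
  by move: vN; rewrite /N mulmxBr mul_mx_scalar => /eqP; rewrite subr_eq0 => /eqP.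
move/lb => lmu; apply: le_trans (lbmu w); apply: ler_wpM2r => //; exact: dotc_ge0.
Qed.


Lemma lip_sq (R : realType) (m : nat) (L : R) (G : 'cV[R]_m -> 'cV[R]_m) :
  0 <= L -> (forall x y, enorm (G x - G y) <= L * enorm (x - y)) ->
  forall x y, dotc (G x - G y) (G x - G y) <= L ^+ 2 * dotc (x - y) (x - y).
Proof.
move=> L0 lip x y; rewrite -!enorm_sq -exprMn expr2 [X in _ <= X]expr2.
apply: ler_pM; try exact: enorm_ge0; exact: lip.
Qed.

Lemma dot_small (R : realType) (m : nat) (L : R) (a d : 'cV[R]_m) :
  0 <= L -> dotc a a <= L ^+ 2 * dotc d d -> dotc a d <= L * dotc d d.
Proof.
move=> L0 h; case: (eqVneq L 0) => [L00|Ln].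
  have h' : dotc a a <= 0 by rewrite L00 in h; move: h; rewrite expr2 mulr0 mul0r.
  have a0 : dotc a a = 0 by apply/eqP; rewrite eq_le h' dotc_ge0.
  by rewrite (dotc_eq0 a0) dotc0l L00 mul0r.
have Lp : 0 < L by rewrite lt_neqAle eq_sym Ln.
have Li : 0 < L^-1 by rewrite invr_gt0.
have := young a d Li; rewrite invrK => hy.
have : L^-1 * dotc a a <= L * dotc d d.
  rewrite ler_pdivrMl //; by rewrite mulrA -expr2.
lra.
Qed.

Lemma descent (R : realType) (m : nat) (L : R) (g : 'cV[R]_m -> R) G :
  lipschitz_differentiable L g G -> 0 <= L ->
  forall x y, g y <= g x + dotc (G x) (y - x) + L * dotc (y - x) (y - x).
Proof.
move=> [gradG lip] L0 x y; set d := y - x.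
pose phi := fun t : R => g (t *: d + x).
pose dphi := fun t : R => dotc (G (t *: d + x)) d.
have der : forall t : R, is_derive t 1 phi (dphi t).
  move=> t; have [dg dval] := gradG (t *: d + x).
  have e : (fun h : R => h^-1 *: ((phi \o shift t) (h *: (1 : R)) - phi t)) =
           (fun h : R => h^-1 *: ((g \o shift (t *: d + x)) (h *: d) - g (t *: d + x))).
    apply/funext => h; rewrite /phi /=; congr (_ *: (g _ - _)).
    by rewrite [h *: 1]mulr1 scalerDl addrA.
  have dv : derivable g (t *: d + x) d by exact: diff_derivable.
  split; first by rewrite /derivable e; exact: dv.
  by rewrite /derive e -/(derive g _ d) deriveE // dval.
have cont : {within `[0, 1], continuous phi}.
  apply: derivable_within_continuous => t _; have := der t; by case.
have [c cin hc] := MVT ltr01 (fun t _ => der t) cont.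
move: hc; rewrite /phi /dphi scale1r scale0r add0r subr0 mulr1.
have -> : d + x = y by rewrite /d subrK.
move=> hc.
have h1 := lip_sq L0 lip (c *: d + x) x.
have ec : c *: d + x - x = c *: d by rewrite addrK.
rewrite ec dotcZl dotcZr in h1.
have c01 : c ^+ 2 <= 1.
  move: cin; rewrite in_itv /= => /andP[c0 c1].
  by rewrite expr_le1 // ltW.
have h2 : dotc (G (c *: d + x) - G x) (G (c *: d + x) - G x) <= L ^+ 2 * dotc d d.
  apply: (le_trans h1); have hd := dotc_ge0 d; have hL := sqr_ge0 L.
  have hm := mulr_ge0 hL hd; rewrite expr2 in c01 hm hL |- *; nra.

have := dot_small L0 h2; rewrite dotcBl => h3.
lra.
Qed.


Lemma quad_opt (R : realType) (m : nat) (G : 'cV[R]_m) (c : 'cV[R]_m -> R) :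
  (forall t v, 0 <= t * dotc G v + t ^+ 2 * c v) -> G = 0.
Proof.
move=> H; apply: dotc_eq0; apply/eqP; rewrite eq_le dotc_ge0 andbT.
rewrite leNgt; apply/negP => gp.
set a := dotc G G; set C := `|c G| + 1.
have Cp : 0 < C by rewrite /C ltr_pwDr.
have := H (- (a / (2 * C))) G; rewrite -/a.
have hc : c G <= `|c G| by apply: ler_norm.
set s := a / (2 * C).
have sp : 0 < s by rewrite /s divr_gt0 // mulr_gt0.
have hs : s * (2 * C) = a by rewrite /s divfK // mulf_neq0 // ?gt_eqF.
have h1 : s ^+ 2 * c G <= s ^+ 2 * C.
  by apply: ler_wpM2l; [exact: sqr_ge0 | rewrite /C; lra].
have h2 : s ^+ 2 * C = s * a / 2 by rewrite -hs; field.
have h3 : 0 < s * a by apply: mulr_gt0.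
rewrite mulNr sqrrN; lra.
Qed.

Lemma nonzero_vec (R : realType) (m : nat) (M : 'M[R]_m) a :
  eigenvalue M a -> exists w : 'cV[R]_m, 0 < dotc w w.
Proof.
move=> /eigenvalueP[v _ vn]; exists v^T.
rewrite lt_neqAle dotc_ge0 andbT eq_sym; apply/negP => /eqP /dotc_eq0 /eqP.
by rewrite trmx_eq0 (negbTE vn).
Qed.

Lemma lip_ge0 (R : realType) (m : nat) (L : R) (g : 'cV[R]_m -> R) G :
  (exists w : 'cV[R]_m, 0 < dotc w w) -> lipschitz_differentiable L g G -> 0 <= L.
Proof.
move=> [w wp] [_ lip]; have := lip w 0; rewrite !subr0 => h.
have ep : 0 < enorm w by rewrite /enorm sqrtr_gt0.
have := le_trans (enorm_ge0 _) h; rewrite pmulr_lge0 //.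
Qed.

Lemma lam_pos (R : realType) (n q : nat) (B : 'M[R]_(n, q)) lam :
  \rank B = q -> eigenvalue (B^T *m B) lam -> 0 < lam.
Proof.
move=> rk /eigenvalueP[v vM vn].
have sym : (B^T *m B)^T = B^T *m B by rewrite trmx_mul trmxK.
have e : dotc (B *m v^T) (B *m v^T) = lam * dotc v^T v^T.
  rewrite dotc_mulmx mulmxA.
  have -> : B^T *m B *m v^T = (v *m (B^T *m B))^T by rewrite trmx_mul sym.
  by rewrite vM linearZ /= dotcZl.
have vp : 0 < dotc v^T v^T.
  rewrite lt_neqAle dotc_ge0 andbT eq_sym; apply/negP => /eqP /dotc_eq0 /eqP.
  by rewrite trmx_eq0 (negbTE vn).
rewrite ltNge; apply/negP => l0.
have : dotc (B *m v^T) (B *m v^T) = 0.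
  apply/eqP; rewrite eq_le dotc_ge0 andbT e; nra.
move=> /dotc_eq0 /(congr1 trmx); rewrite trmx_mul trmxK trmx0 => /eqP.
have rf : row_free B^T by rewrite /row_free mxrank_tr rk.
by rewrite (mulmx_free_eq0 _ rf) (negbTE vn).
Qed.


Definition tz (R : realType) (u : nat -> R) :=
  forall e, 0 < e -> exists N, forall k, (N <= k)%N -> `|u k| <= e.

Lemma tz_le (R : realType) (u v : nat -> R) :
  (forall k, `|u k| <= v k) -> tz v -> tz u.
Proof.
move=> h tv e ep; have [N hN] := tv e ep; exists N => k kN.
by apply: le_trans (h k) _; apply: le_trans (ler_norm _) (hN k kN).
Qed.

Lemma tzD (R : realType) (u v : nat -> R) : tz u -> tz v -> tz (fun k => u k + v k).
Proof.
move=> tu tv e ep; have e2 : 0 < e / 2 by rewrite divr_gt0.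
have [N1 h1] := tu _ e2; have [N2 h2] := tv _ e2; exists (maxn N1 N2) => k kN.
have k1 : (N1 <= k)%N by apply: leq_trans kN; exact: leq_maxl.
have k2 : (N2 <= k)%N by apply: leq_trans kN; exact: leq_maxr.
apply: le_trans (ler_normD _ _) _; have := h1 k k1; have := h2 k k2; lra.
Qed.

Lemma tzZ (R : realType) (c : R) (u : nat -> R) : tz u -> tz (fun k => c * u k).
Proof.
move=> tu e ep; have cp : 0 < `|c| + 1 by rewrite ltr_pwDr.
have [N h] := tu (e / (`|c| + 1)) (divr_gt0 ep cp); exists N => k kN.
rewrite normrM; have := h k kN; rewrite ler_pdivlMr // => hk.
have := normr_ge0 (u k); have := normr_ge0 c; nra.
Qed.

Lemma tz_shift (R : realType) (u : nat -> R) : tz u -> tz (fun k => u k.+1).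
Proof. by move=> tu e ep; have [N h] := tu e ep; exists N => k kN; apply: h; apply: leqW. Qed.

Lemma tz_cvg (R : realType) (u : nat -> R) l : tz (fun k => u k - l) -> u @ \oo --> l.
Proof.
move=> tu; apply/cvgrPdist_le => e ep; have [N h] := tu e ep.
exists N => // k /= kN; by rewrite distrC; apply: h.
Qed.

Lemma cvg_tz (R : realType) (u : nat -> R) l : u @ \oo --> l -> tz (fun k => u k - l).
Proof.
move/cvgrPdist_le => h e ep; have [N _ hN] := h e ep.
by exists N => k kN; rewrite distrC; apply: hN.
Qed.

Lemma tz_dot_bd (R : realType) (m : nat) (a b : nat -> 'cV[R]_m) (M : R) :
  (forall k, dotc (a k) (a k) <= M) -> tz (fun k => dotc (b k) (b k)) ->
  tz (fun k => dotc (a k) (b k)).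
Proof.
move=> ha tb e ep.
have Mp : 0 < `|M| + 1 by rewrite ltr_pwDr.
set t := e / (`|M| + 1).
have tp : 0 < t by rewrite divr_gt0.
have [N h] := tb (t * e) (mulr_gt0 tp ep); exists N => k kN.
have hb := h k kN; rewrite ger0_norm in hb; last exact: dotc_ge0.
have y1 := young (a k) (b k) tp; have y2 := young (- a k) (b k) tp.
rewrite dotcNl dotcNr dotcNl opprK in y2.
have hM : t * dotc (a k) (a k) <= e.
  have : t * (`|M| + 1) = e by rewrite /t divfK // gt_eqF.
  have := ha k; have := ler_norm M; have := dotc_ge0 (a k); nra.
have hi : t^-1 * dotc (b k) (b k) <= e.
  by rewrite -ler_pdivlMl ?invr_gt0 // invrK.
rewrite ler_norml; apply/andP; split; lra.
Qed.


Lemma tz_eq (R : realType) (u v : nat -> R) : (forall k, u k = v k) -> tz v -> tz u.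
Proof. by move=> e tv eps ep; have [N h] := tv eps ep; exists N => k kN; rewrite e; apply: h. Qed.

Lemma tz_unshift (R : realType) (u : nat -> R) : tz (fun k => u k.+1) -> tz u.
Proof.
move=> tu e ep; have [N h] := tu e ep; exists N.+1 => k kN.
by case: k kN => // k kN; apply: h.
Qed.

Lemma nqD (R : realType) (m : nat) (u v : 'cV[R]_m) :
  dotc (u + v) (u + v) = dotc u u + 2 * dotc u v + dotc v v.
Proof. by have := nqDZ 1 u v; rewrite scale1r expr1n !mul1r mulr1. Qed.

Lemma Bbound (R : realType) (n q : nat) (B : 'M[R]_(n, q)) lam :
  0 < lam -> (forall w, lam * dotc w w <= dotc (B *m w) (B *m w)) ->
  forall w, lam * dotc (B *m w) (B *m w) <= dotc (B^T *m (B *m w)) (B^T *m (B *m w)).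
Proof.
move=> lp sp w; set z := B^T *m (B *m w).
have e : dotc (B *m w) (B *m w) = dotc w z by rewrite dotc_mulmx dotcC.
have := young w z lp; have := sp w; rewrite -e => h1 h2.
have : dotc (B *m w) (B *m w) <= lam^-1 * dotc z z by lra.
by rewrite -ler_pdivlMl ?invr_gt0 // invrK.
Qed.
Unset Implicit Arguments.

Theorem corollary2 (R : realType) (n p q : nat)
  (A : 'M[R]_(n, p)) (B : 'M[R]_(n, q))
  (f g : 'cV[R]_p -> R) (h : 'cV[R]_q -> R)
  (gradg : 'cV[R]_p -> 'cV[R]_p) (gradh : 'cV[R]_q -> 'cV[R]_q)
  (Lg Lh Lx Ly beta LA lamB : R)
  (xs : nat -> 'cV[R]_p) (ys : nat -> 'cV[R]_q) (gs : nat -> 'cV[R]_n) :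
  (* (i), (ii) *)
  lipschitz_differentiable Lh h gradh ->
  lipschitz_differentiable Lg g gradg ->
  (* (iii) lower bounded and coercive in y on the feasible set *)
  (exists lb : R, forall x y, A *m x + B *m y = 0 -> lb <= g x + f x + h y) ->
  (forall (u : nat -> 'cV[R]_p) (v : nat -> 'cV[R]_q),
      (forall k, A *m u k + B *m v k = 0) ->
      (fun k => enorm (v k)) @ \oo --> +oo ->
      (fun k => g (u k) + f (u k) + h (v k)) @ \oo --> +oo) ->
  (* (iv) *)
  \rank B = q ->
  (forall x : 'cV[R]_p, exists y : 'cV[R]_q, A *m x = B *m y) ->
  (* L_A = largest eigenvalue of A^T A, lamB = smallest eigenvalue of B^T B *)
  eigenvalue (A^T *m A) LA ->
  (forall a, eigenvalue (A^T *m A) a -> a <= LA) ->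
  eigenvalue (B^T *m B) lamB ->
  (forall a, eigenvalue (B^T *m B) a -> lamB <= a) ->
  (* parameters *)
  0 < Lx -> 0 < Ly -> 0 < beta ->
  let Lw := Lg + Lh in
  let Cm := (Ly + Lw ^+ 2) / 2 in
  Lg + beta * LA + 6 * Lw ^+ 2 + 1 <= Lx ->
  Lw + Lw ^+ 2 + 3 <= Ly ->
  Num.max (Num.max ((Lw + Ly + 2) / lamB)
                   (3 * (Lw ^+ 2 + Ly ^+ 2) / (lamB * Cm)))
          (3 * Ly ^+ 2 / lamB) <= beta ->
  (* the two-block linearized ADMM iteration *)
  (forall k x,
      f (xs k.+1) + dotc (gs k) (A *m xs k.+1)
        + Lx / 2 * enorm (xs k.+1 - xs k) ^+ 2
        + dotc (xs k.+1 - xs k)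
               (gradg (xs k) + beta *: (A^T *m (A *m xs k + B *m ys k)))
      <=
      f x + dotc (gs k) (A *m x)
        + Lx / 2 * enorm (x - xs k) ^+ 2
        + dotc (x - xs k)
               (gradg (xs k) + beta *: (A^T *m (A *m xs k + B *m ys k)))) ->
  (forall k y,
      dotc (gs k) (B *m ys k.+1) + Ly / 2 * enorm (ys k.+1 - ys k) ^+ 2
        + beta / 2 * enorm (A *m xs k.+1 + B *m ys k.+1) ^+ 2
        + dotc (ys k.+1 - ys k) (gradh (ys k))
      <=
      dotc (gs k) (B *m y) + Ly / 2 * enorm (y - ys k) ^+ 2
        + beta / 2 * enorm (A *m xs k.+1 + B *m y) ^+ 2
        + dotc (y - ys k) (gradh (ys k))) ->
  (forall k, gs k.+1 = gs k + beta *: (A *m xs k.+1 + B *m ys k.+1)) ->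
  cvg ((fun k => g (xs k) + f (xs k) + h (ys k)) @ \oo).
Proof.
move=> hLh hLg [lb hlb] hcoer rkB hIm eigA maxA eigB minB Lx0 Ly0 b0 Lw Cm hLx hLy hbeta hx hy hg.
have Lg0 : 0 <= Lg := lip_ge0 (nonzero_vec eigA) hLg.
have Lh0 : 0 <= Lh := lip_ge0 (nonzero_vec eigB) hLh.
have lamp : 0 < lamB := lam_pos rkB eigB.
have specB : forall w, lamB * dotc w w <= dotc (B *m w) (B *m w).
  have symB : (B^T *m B)^T = B^T *m B by rewrite trmx_mul trmxK.
  move=> w; have := spec_lb symB minB w; by rewrite -mulmxA dotc_mulmx trmxK.
have specA : forall w, dotc (A *m w) (A *m w) <= LA * dotc w w.
  have symA : (- (A^T *m A))^T = - (A^T *m A) by rewrite linearN /= trmx_mul trmxK.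
  have lbA : forall a, eigenvalue (- (A^T *m A)) a -> - LA <= a.
    move=> a /eigenvalueP[v vM vn].
    have : eigenvalue (A^T *m A) (- a).
      by apply/eigenvalueP; exists v => //; rewrite scaleNr -vM mulmxN opprK.
    by move/maxA; rewrite lerNl.
  move=> w; have := spec_lb symA lbA w.
  by rewrite mulNmx dotcNr -mulmxA dotc_mulmx dotcC mulNr lerN2.
have BB := Bbound lamp specB.
have dg := descent hLg Lg0; have dh := descent hLh Lh0.
have liph := lip_sq Lh0 hLh.2.
have LhLw : Lh <= Lw by rewrite /Lw lerDr.
have LgLw : Lg <= Lw by rewrite /Lw lerDl.
have Lw0 : 0 <= Lw by rewrite /Lw addr_ge0.
set s := beta * lamB.
have sp : 0 < s by rewrite mulr_gt0.
have Cmp : 0 < Cm by rewrite /Cm divr_gt0 // ltr_wpDr // sqr_ge0.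
rewrite !ge_max in hbeta; case/andP: hbeta => /andP[hb1 hb2] hb3.
have P1 : 3 * Ly ^+ 2 <= s by rewrite /s -ler_pdivrMr.
have P2 : 3 * (Lw ^+ 2 + Ly ^+ 2) <= s * Cm by rewrite /s -mulrA -ler_pdivrMr // mulr_gt0.
have P3 : Lw + Ly + 2 <= s by rewrite /s -ler_pdivrMr.
pose r k := A *m xs k + B *m ys k.
pose dy k := dotc (ys k.+1 - ys k) (ys k.+1 - ys k).
have dy0 : forall k, 0 <= dy k by move=> k; apply: dotc_ge0.
pose F k := g (xs k) + f (xs k) + h (ys k).
pose Lag k := F k + dotc (gs k) (r k) + beta / 2 * dotc (r k) (r k).
have [zeta hz] := choice (fun k : nat => hIm (xs k)).
pose wv k := zeta k + ys k.
have rw : forall k, r k = B *m wv k by move=> k; rewrite /r /wv mulmxDr hz.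
pose phi k y := dotc (gs k) (B *m y) + Ly / 2 * enorm (y - ys k) ^+ 2
        + beta / 2 * enorm (A *m xs k.+1 + B *m y) ^+ 2
        + dotc (y - ys k) (gradh (ys k)).
have hphi : forall k y, phi k (ys k.+1) <= phi k y by move=> k y; exact: hy.
have yexp : forall k t v, phi k (ys k.+1 + t *: v) = phi k (ys k.+1)
    + t * dotc (B^T *m gs k.+1 + Ly *: (ys k.+1 - ys k) + gradh (ys k)) v
    + t ^+ 2 * (Ly / 2 * dotc v v + beta / 2 * dotc (B *m v) (B *m v)).
  move=> k t v; rewrite /phi !enorm_sq.
  have e1 : ys k.+1 + t *: v - ys k = (ys k.+1 - ys k) + t *: v by rewrite addrAC.
  have e2 : A *m xs k.+1 + B *m (ys k.+1 + t *: v)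
      = (A *m xs k.+1 + B *m ys k.+1) + t *: (B *m v) by rewrite mulmxDr -scalemxAr addrA.
  have p1 : dotc (gs k) (B *m (ys k.+1 + t *: v))
      = dotc (gs k) (B *m ys k.+1) + t * dotc (gs k) (B *m v).
    by rewrite mulmxDr -scalemxAr dotcDr dotcZr.
  have p2 : dotc (ys k.+1 - ys k + t *: v) (gradh (ys k))
      = dotc (ys k.+1 - ys k) (gradh (ys k)) + t * dotc (gradh (ys k)) v.
    by rewrite dotcDl dotcZl [dotc v _]dotcC.
  have p3 : dotc (B^T *m gs k.+1 + Ly *: (ys k.+1 - ys k) + gradh (ys k)) v
      = dotc (gs k) (B *m v) + beta * dotc (A *m xs k.+1 + B *m ys k.+1) (B *m v)
        + Ly * dotc (ys k.+1 - ys k) v + dotc (gradh (ys k)) v.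
    by rewrite (dotcDl (B^T *m gs k.+1 + Ly *: (ys k.+1 - ys k))) (dotcDl (B^T *m gs k.+1)) dotcZl -dotc_mulmx hg (dotcDl (gs k)) dotcZl.
  rewrite e1 e2 !nqDZ p1 p2 p3; lra.
have Gz : forall k, B^T *m gs k.+1 + Ly *: (ys k.+1 - ys k) + gradh (ys k) = 0.
  move=> k; apply: (quad_opt (c := fun v => Ly / 2 * dotc v v + beta / 2 * dotc (B *m v) (B *m v))) => t v.
  have := hphi k (ys k.+1 + t *: v); rewrite yexp; lra.
have Yopt : forall k, B^T *m gs k.+1 = - (gradh (ys k) + Ly *: (ys k.+1 - ys k)).
  by move=> k; apply/eqP; rewrite -subr_eq0 opprK (addrC (gradh (ys k))) addrA Gz.
have Ydec : forall k, phi k (ys k) = phi k (ys k.+1) + Ly / 2 * dy k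
    + beta / 2 * dotc (B *m (ys k.+1 - ys k)) (B *m (ys k.+1 - ys k)).
  move=> k; have := yexp k (-1) (ys k.+1 - ys k).
  have -> : ys k.+1 + (-1) *: (ys k.+1 - ys k) = ys k by rewrite scaleN1r opprB addrC subrK.
  rewrite Gz dotc0l sqrrN expr1n mul1r mulr0 addr0 => ->; rewrite /dy; lra.
have Xstep : forall k, g (xs k.+1) + f (xs k.+1) + h (ys k)
    + dotc (gs k) (A *m xs k.+1 + B *m ys k)
    + beta / 2 * dotc (A *m xs k.+1 + B *m ys k) (A *m xs k.+1 + B *m ys k) <= Lag k.
  move=> k; have H := hx k (xs k); rewrite subrr !enorm_sq !dotc0l in H.
  set d := xs k.+1 - xs k in H *.
  have e : A *m xs k.+1 + B *m ys k = (A *m xs k + B *m ys k) + A *m d.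
    by rewrite /d mulmxBr [RHS]addrC addrA subrK.
  have e2 : dotc (gs k) (A *m d) = dotc (gs k) (A *m xs k.+1) - dotc (gs k) (A *m xs k).
    by rewrite /d mulmxBr dotcBr.
  rewrite dotcDr dotcZr [dotc d (A^T *m _)]dotc_mulmx trmxK in H.
  have hdg := dg (xs k) (xs k.+1); rewrite -/d in hdg.
  have hA := specA d.
  have hA2 : beta / 2 * dotc (A *m d) (A *m d) <= beta / 2 * (LA * dotc d d).
    by apply: ler_wpM2l => //; rewrite divr_ge0 // ltW.
  have hL : Lg <= 6 * Lw ^+ 2 + 1 by nra.
  have hLx2 : 0 <= (Lx / 2 - Lg - beta * LA / 2) * dotc d d.
    by apply: mulr_ge0; [lra | exact: dotc_ge0].
  rewrite e dotcDr nqD /Lag /F /r.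
  rewrite (dotcC d (gradg (xs k))) (dotcC (A *m d)) in H; rewrite e2.
  lra.
have LagStep : forall k,
    Lag k.+1 <= Lag k - (Ly - Lh + s / 2) * dy k + beta * dotc (r k.+1) (r k.+1).
  move=> k; have X := Xstep k; have Yd := Ydec k.
  have hh := dh (ys k) (ys k.+1); have sB := specB (ys k.+1 - ys k).
  have sB2 : beta / 2 * (lamB * dy k) <= beta / 2 *
      dotc (B *m (ys k.+1 - ys k)) (B *m (ys k.+1 - ys k)).
    by apply: ler_wpM2l => //; rewrite divr_ge0 // ltW.
  rewrite /phi !enorm_sq subrr !dotc0l in Yd.
  rewrite (dotcC (ys k.+1 - ys k) (gradh (ys k))) in Yd.
  rewrite dotcDr in X.
  rewrite /Lag /F /r hg dotcDl dotcZl dotcDr.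
  rewrite /Lag /F /r in X.
  rewrite /dy /s in sB2 *; rewrite /dy in Yd.
  lra.
have Rb : forall k, s * (beta * dotc (r k.+2) (r k.+2))
    <= 3 * Lh ^+ 2 * dy k + 3 * Ly ^+ 2 * dy k.+1 + 3 * Ly ^+ 2 * dy k.
  move=> k.
  have h' := congr1 (mulmx B^T) (hg k.+1); rewrite mulmxDr -scalemxAr !Yopt in h'.
  have e : beta *: (B^T *m r k.+2) = - (gradh (ys k.+1) - gradh (ys k))
      + (- (Ly *: (ys k.+2 - ys k.+1))) + Ly *: (ys k.+1 - ys k).
    have -> : beta *: (B^T *m r k.+2) = (gradh (ys k) + Ly *: (ys k.+1 - ys k))
        - (gradh (ys k.+1) + Ly *: (ys k.+2 - ys k.+1)).
      by rewrite h' addrA subrr add0r.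
    by apply/matrixP => i j; rewrite !mxE; ring.
  have n1 := nqD3 (- (gradh (ys k.+1) - gradh (ys k)))
      (- (Ly *: (ys k.+2 - ys k.+1))) (Ly *: (ys k.+1 - ys k)).
  rewrite -e !(dotcNl, dotcNr, opprK, dotcZl, dotcZr) in n1.
  have l1 := liph (ys k.+1) (ys k).
  have b1 := BB (wv k.+2); rewrite -rw in b1.
  have b2 : beta ^+ 2 * (lamB * dotc (r k.+2) (r k.+2))
      <= beta ^+ 2 * dotc (B^T *m r k.+2) (B^T *m r k.+2).
    by apply: ler_wpM2l => //; apply: sqr_ge0.
  have eq1 : s * (beta * dotc (r k.+2) (r k.+2)) = beta ^+ 2 * (lamB * dotc (r k.+2) (r k.+2)).
    by rewrite /s; ring.
  have dd : dotc (ys k.+1 - ys k) (ys k.+1 - ys k) = dy k by [].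
  have dd1 : dotc (ys k.+2 - ys k.+1) (ys k.+2 - ys k.+1) = dy k.+1 by [].
  have l2 : 3 * dotc (gradh (ys k.+1) - gradh (ys k)) (gradh (ys k.+1) - gradh (ys k))
      <= 3 * (Lh ^+ 2 * dy k) by rewrite ler_pM2l // -dd.
  rewrite dd dd1 in n1.
  rewrite eq1; apply: (le_trans b2); rewrite !expr2 in l2 *; lra.
set c := 3 * (Lh ^+ 2 + Ly ^+ 2) / s.
have c0 : 0 <= c by rewrite /c divr_ge0 ?(ltW sp) // mulr_ge0 // addr_ge0 // sqr_ge0.
have LhLw2 : Lh ^+ 2 <= Lw ^+ 2 by rewrite ler_sqr // nnegrE.
have Kneg : 3 * Ly ^+ 2 / s + c - (Ly - Lh + s / 2) <= -1.
  have a1 : 3 * Ly ^+ 2 / s <= 1 by rewrite ler_pdivrMr // mul1r.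
  have a2 : c <= Cm by rewrite /c ler_pdivrMr // mulrC; lra.
  have := sqr_ge0 Lw; rewrite /Cm in a2; lra.
pose Psi k := Lag k.+1 + c * dy k.
have PsiStep : forall k, Psi k.+1 + dy k.+1 <= Psi k.
  move=> k; have L1 := LagStep k.+1.
  have r1 : beta * dotc (r k.+2) (r k.+2) <= c * dy k + 3 * Ly ^+ 2 / s * dy k.+1.
    rewrite -(ler_pM2l sp) mulrDr.
    have -> : s * (c * dy k) = 3 * (Lh ^+ 2 + Ly ^+ 2) * dy k.
      by rewrite /c; field; rewrite gt_eqF.
    have -> : s * (3 * Ly ^+ 2 / s * dy k.+1) = 3 * Ly ^+ 2 * dy k.+1.
      by field; rewrite gt_eqF.
    have := Rb k; lra.
  have k1 : (3 * Ly ^+ 2 / s + c - (Ly - Lh + s / 2)) * dy k.+1 <= -1 * dy k.+1.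
    by apply: ler_wpM2r.
  rewrite /Psi; lra.
have s3Lh : 3 * Lh <= s.
  have : Lh <= Ly by have := sqr_ge0 Lw; lra.
  have : 1 <= Ly by have := sqr_ge0 Lw; lra.
  move=> h1 h2; apply: le_trans P1; nra.
have Fbound : forall k, g (xs k.+1) + f (xs k.+1) + h (- zeta k.+1) <= Psi k.
  move=> k; set w := wv k.+1.
  have ew : - zeta k.+1 - ys k.+1 = - w by rewrite /w /wv opprD.
  have i1 := dh (ys k.+1) (- zeta k.+1).
  rewrite ew dotcNr dotcNl dotcNr opprK in i1.
  have i2 : dotc (gs k.+1) (r k.+1) = - dotc (gradh (ys k)) w - Ly * dotc (ys k.+1 - ys k) w.
    by rewrite rw -/w dotc_mulmx Yopt dotcNl dotcDl dotcZl opprD.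
  set t := 3 / s.
  have tp : 0 < t by rewrite /t divr_gt0.
  set e := gradh (ys k.+1) - gradh (ys k) - Ly *: (ys k.+1 - ys k).
  have y1 := young (- e) w tp.
  rewrite dotcNl dotcNr dotcNl opprK in y1.
  have n1 := nqD2 (gradh (ys k.+1) - gradh (ys k)) (- (Ly *: (ys k.+1 - ys k))).
  rewrite -/e dotcNl dotcNr opprK !dotcZl !dotcZr in n1.
  have l1 := liph (ys k.+1) (ys k).
  have n2 : t * dotc e e <= 2 * c * dy k.
    have : dotc e e <= (2 * Lh ^+ 2 + 2 * Ly ^+ 2) * dy k by rewrite /dy; nra.
    move=> h1; have := ler_wpM2l (ltW tp) h1.
    have -> : t * ((2 * Lh ^+ 2 + 2 * Ly ^+ 2) * dy k) = 2 * c * dy k by rewrite /t /c; field; rewrite gt_eqF.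
    done.
  have ti : t^-1 = s / 3 by rewrite /t invf_div.
  rewrite ti in y1.
  have ee : dotc e w = dotc (gradh (ys k.+1)) w - dotc (gradh (ys k)) w - Ly * dotc (ys k.+1 - ys k) w.
    by rewrite /e (dotcBl (gradh (ys k.+1) - gradh (ys k))) (dotcBl (gradh (ys k.+1))) dotcZl.
  have i4 := specB w; rewrite -rw in i4.
  have i5 : beta / 6 * (lamB * dotc w w) <= beta / 6 * dotc (r k.+1) (r k.+1).
    by apply: ler_wpM2l => //; rewrite divr_ge0 // ltW.
  have i6 : 0 <= (s / 3 - Lh) * dotc w w by apply: mulr_ge0; [lra | exact: dotc_ge0].
  rewrite /Psi /Lag /F i2; rewrite /s in y1 i6.
  lra.
have Psi_ni : nonincreasing_seq Psi.
  by apply/nonincreasing_seqP => k; have := PsiStep k; have := dy0 k.+1; lra.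
have feas : forall k, A *m xs k + B *m (- zeta k) = 0.
  by move=> k; rewrite mulmxN hz subrr.
have Psi_lb : forall k, lb <= Psi k.
  by move=> k; apply: le_trans (Fbound k); apply: hlb.
have Pl : Psi @ \oo --> inf (Psi @` setT).
  apply: nonincreasing_cvgn => //; exists lb => _ [k _ <-]; exact: Psi_lb.
set l := inf (Psi @` setT) in Pl.
have tP := cvg_tz Pl.
have tdy1 : tz (fun k => dy k.+1).
  have tv : tz (fun k => (Psi k - l) + (-1) * (Psi k.+1 - l)).
    exact: tzD tP (tzZ (-1) (tz_shift tP)).
  apply: tz_le tv => k; rewrite ger0_norm //; have := PsiStep k; lra.
have tdy : tz dy := tz_unshift tdy1.
set Dm := dy 0%N + (Psi 0%N - lb).
have dyb : forall k, dy k <= Dm.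
  case => [|k]; first by have := Psi_lb 0%N; rewrite /Dm; lra.
  have h1 := PsiStep k; have h2 : Psi k <= Psi 0%N by apply: Psi_ni.
  have := Psi_lb k.+1; have := dy0 0%N; rewrite /Dm; lra.
have [Mz hMz] : exists M, forall k, dotc (zeta k.+1) (zeta k.+1) <= M.
  apply: contrapT => nb.
  have H : forall j : nat, exists k, (j%:R : R) ^+ 2 < dotc (zeta k.+1) (zeta k.+1).
    move=> j; apply: contrapT => /forallNP hj; apply: nb; exists (j%:R ^+ 2) => k.
    by rewrite leNgt; apply/negP; apply: hj.
  have [phi0 hphi0] := choice H.
  pose u j := xs (phi0 j).+1; pose v j := - zeta (phi0 j).+1.
  have hF := hcoer u v (fun j => feas (phi0 j).+1).
  have : (fun j => enorm (v j)) @ \oo --> +oo.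
    apply/cvgryPge => A0; exists (Num.Def.trunc A0).+1 => // j /= hj.
    have hA := truncnS_gt A0.
    have hj' : ((Num.Def.trunc A0).+1%:R : R) <= j%:R by rewrite ler_nat.
    have hs : (j%:R : R) <= enorm (v j).
      rewrite /enorm /v dotcNl dotcNr opprK.
      rewrite -[X in X <= _](@normr_nat R) -sqrtr_sqr ler_sqrt; last exact: dotc_ge0.
      exact: ltW (hphi0 j).
    lra.
  move/hF/cvgryPge => /(_ (Psi 0%N + 1)) [N _ hN].
  have := hN N (leqnn N); rewrite /u /v.
  have := Fbound (phi0 N); have := Psi_ni 0%N (phi0 N) (leq0n _); lra.
have Kr0 : 0 < s * beta by rewrite mulr_gt0.
set Kr := (3 * Lh ^+ 2 * Dm + 6 * Ly ^+ 2 * Dm) / (s * beta).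
have rb : forall k, dotc (r k.+2) (r k.+2) <= Kr.
  move=> k; rewrite /Kr ler_pdivlMr //.
  have := Rb k; have d1 := dyb k; have d2 := dyb k.+1.
  have := ler_wpM2l (mulr_ge0 (ler0n _ 3) (sqr_ge0 Lh)) d1.
  have := ler_wpM2l (mulr_ge0 (ler0n _ 3) (sqr_ge0 Ly)) d1.
  have := ler_wpM2l (mulr_ge0 (ler0n _ 3) (sqr_ge0 Ly)) d2.
  rewrite /s; lra.
have wb : forall k, dotc (wv k.+2) (wv k.+2) <= Kr / lamB.
  move=> k; rewrite ler_pdivlMr // mulrC; apply: le_trans (specB _) _.
  by rewrite -rw; exact: rb.
set My := 2 * (2 * (Kr / lamB) + 2 * Mz) + 2 * Dm.
have yb : forall k, dotc (ys k.+1) (ys k.+1) <= My.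
  move=> k.
  have e1 : ys k.+2 + - (ys k.+2 - ys k.+1) = ys k.+1 by rewrite opprB addrC subrK.
  have e2 : wv k.+2 + - zeta k.+2 = ys k.+2 by rewrite /wv addrC addKr.
  have n1 := nqD2 (ys k.+2) (- (ys k.+2 - ys k.+1)); rewrite e1 dotcNl dotcNr opprK in n1.
  have n2 := nqD2 (wv k.+2) (- zeta k.+2); rewrite e2 dotcNl dotcNr opprK in n2.
  have := wb k; have := hMz k.+1; have := dyb k.+1; rewrite /My /dy; lra.
set Mg := 2 * (Lh ^+ 2 * My) + 2 * dotc (gradh 0) (gradh 0).
have gb : forall k, dotc (gradh (ys k.+1)) (gradh (ys k.+1)) <= Mg.
  move=> k; have n1 := nqD2 (gradh (ys k.+1) - gradh 0) (gradh 0).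
  rewrite subrK in n1; have l1 := liph (ys k.+1) 0; rewrite subr0 in l1.
  have := ler_wpM2l (sqr_ge0 Lh) (yb k); rewrite /Mg; lra.
have Tv : tz (fun k => (s * beta)^-1 * (3 * Lh ^+ 2 * dy k + 3 * Ly ^+ 2 * dy k.+1
    + 3 * Ly ^+ 2 * dy k)).
  exact: tzZ (tzD (tzD (tzZ _ tdy) (tzZ _ tdy1)) (tzZ _ tdy)).
have Tr : tz (fun k => dotc (r k.+2) (r k.+2)).
  apply: tz_le Tv => k; rewrite ger0_norm; last exact: dotc_ge0.
  rewrite mulrC ler_pdivlMr // mulrC; have := Rb k; rewrite /s; lra.
have Tw : tz (fun k => dotc (wv k.+2) (wv k.+2)).
  apply: tz_le (tzZ lamB^-1 Tr) => k; rewrite ger0_norm; last exact: dotc_ge0.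
  rewrite mulrC ler_pdivlMr //; have := specB (wv k.+2); rewrite -rw; lra.
have T3 := tz_dot_bd gb Tw.
have T4 := tzZ Ly (tz_dot_bd (a := fun k => ys k.+2 - ys k.+1) (fun k => dyb k.+1) Tw).
have T5 := tzZ (- (beta / 2)) Tr.
have T2 := tzZ (- c) tdy1.
have T1 := tz_shift tP.
have TE := tzD (tzD (tzD (tzD T1 T2) T3) T4) T5.
have FE : tz (fun k => F k.+2 - l).
  apply: tz_eq TE => k; cbv beta.
  have i2 : dotc (gs k.+2) (r k.+2) = - dotc (gradh (ys k.+1)) (wv k.+2)
      - Ly * dotc (ys k.+2 - ys k.+1) (wv k.+2).
    by rewrite rw dotc_mulmx Yopt dotcNl dotcDl dotcZl opprD.
  have : Psi k.+1 = F k.+2 + dotc (gs k.+2) (r k.+2) + beta / 2 * dotc (r k.+2) (r k.+2)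
    + c * dy k.+1 by rewrite /Psi /Lag.
  rewrite i2; move=> ->.
  lra.
apply/cvg_ex; exists l; rewrite -cvg_shiftS -cvg_shiftS.
exact: tz_cvg FE.
Qed.
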